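(* Let $G$ be a finite abelian group of even order and $S=\{s^{\pm1},t^{\pm1},u^{\pm1}\}$ a symmetric generating set. Suppose the $18$ elements $s^it^ju^k$ ($0\le i\le2$, $0\le j\le2$, $0\le k\le1$) are distinct, and let $Y$ be the set of them. Suppose either $G=Y$, or there is a hamiltonian cycle of the subgraph of $\mathrm{Cay}(G;S)$ induced by $G\setminus Y$ that contains the edge from $t^3$ to $t^3s$. Then $\mathcal H$ contains every basic $4$-cycle.
   Context: $\mathrm{Cay}(G;S)$ has vertex set $G$ and edges $\{g,gs\}$. $[v](t_1,\dots,t_n)$ denotes the walk $v,vt_1,\dots,vt_1\cdots t_n$; closed walks are identified with flows ($+1$ on traversed oriented edges, $-1$ on reversals). A basic $4$-cycle is a closed walk $[v](a,b,a^{-1},b^{-1})$ with $v\in G$, $a,b\in S$. A flow is $f:G\times S\to\mathbb Z$ with $f(v,a)=-f(va,a^{-1})$ and $\sum_af(v,a)=0$. $\mathcal H$ is the subgroup of flows generated by oriented hamiltonian cycles. *)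

(* Defs.v *)
From mathcomp Require Import all_boot all_algebra all_fingroup.
Set Implicit Arguments. Unset Strict Implicit. Unset Printing Implicit Defensive.
Import GRing.Theory.

Local Open Scope group_scope.

Section Cayley.
Variable gT : finGroupType.

Definition gen3 (s t u : gT) : {set gT} := [set s; s^-1; t; t^-1; u; u^-1].

Definition Yset (s t u : gT) : {set gT} :=
  [set x | [exists i : 'I_3, exists j : 'I_3, exists k : 'I_2,
              x == s ^+ i * t ^+ j * u ^+ k]].

Definition walk_vert (v : gT) (ts : seq gT) (i : nat) : gT :=
  foldl (fun x y => x * y)%g v (take i ts).

(* Flow of the walk [v](ts): +1 on each traversed oriented edge (v_{i}, t_{i+1}),
   -1 on its reversal (v_{i+1}, t_{i+1}^-1).  A flow is a function G x S -> Z,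
   here written as a curried function. *)
Definition walk_flow (v : gT) (ts : seq gT) : gT -> gT -> int :=
  fun x a =>
    (\sum_(i < size ts)
       (((x == walk_vert v ts i) && (a == nth 1%g ts i))%:Z
        - ((x == walk_vert v ts i.+1) && (a == (nth 1%g ts i)^-1%g))%:Z))%R.

Definition ham_cycle_in (S A : {set gT}) (v : gT) (ts : seq gT) : bool :=
  [&& all (fun a => a \in S) ts,
      walk_vert v ts (size ts) == v,
      2 < size ts,
      uniq [seq walk_vert v ts i | i <- iota 0 (size ts)]
    & [set walk_vert v ts i | i : 'I_(size ts)] == A].

Definition walk_has_edge (v : gT) (ts : seq gT) (x y : gT) : bool :=
  [exists i : 'I_(size ts),
     ((walk_vert v ts i == x) && (walk_vert v ts i.+1 == y))
     || ((walk_vert v ts i == y) && (walk_vert v ts i.+1 == x))].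

(* f belongs to the subgroup H of flows (on G x S) generated by the oriented
   hamiltonian cycles of Cay(G;S): f is a Z-linear combination of them. *)
Definition in_ham_span (S : {set gT}) (f : gT -> gT -> int) : Prop :=
  exists l : seq (int * (gT * seq gT)),
    all (fun p => ham_cycle_in S [set: gT] p.2.1 p.2.2) l /\
    forall x a, a \in S ->
      f x a = (\sum_(p <- l) p.1 * walk_flow p.2.1 p.2.2 x a)%R.

End Cayley.

(* Main.v *)
Require Import Defs.
From mathcomp Require Import all_boot all_algebra all_fingroup.
Set Implicit Arguments. Unset Strict Implicit. Unset Printing Implicit Defensive.
Import GRing.Theory.

Section Gen.
Variable gT : finGroupType.
Local Open Scope group_scope.
Implicit Types (v a w x y z : gT) (l : seq gT).

Definition endv (v : gT) (l : seq gT) := foldl (fun x y => x * y) v l.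
Definition vl (v : gT) (l : seq gT) := [seq walk_vert v l i | i <- iota 0 (size l)].
Definition stepf (v a x y : gT) : int :=
  (((x == v) && (y == a))%:Z - ((x == (v * a)%g) && (y == a^-1%g))%:Z)%R.

Lemma walk_vert_cons v a l i : walk_vert v (a :: l) i.+1 = walk_vert (v * a) l i.
Proof. by []. Qed.
Lemma walk_vert0 v l : walk_vert v l 0 = v. Proof. by case: l. Qed.
Lemma walk_vert_end v l : walk_vert v l (size l) = endv v l.
Proof. by rewrite /walk_vert take_size. Qed.
Lemma walk_vert_take v l i : walk_vert v l i = endv v (take i l).
Proof. by []. Qed.

Lemma vl_nil v : vl v [::] = [::]. Proof. by []. Qed.
Lemma vl_cons v a l : vl v (a :: l) = v :: vl (v * a) l.
Proof.
rewrite /vl /= walk_vert0; congr (_ :: _).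
rewrite -(addn0 1%N) iotaDl -map_comp; apply: eq_map => i /=.
by rewrite add1n.
Qed.
Lemma endv_cons v a l : endv v (a :: l) = endv (v * a) l. Proof. by []. Qed.
Lemma endv_cat v (l1 l2 : seq gT) : endv v (l1 ++ l2) = endv (endv v l1) l2.
Proof. by rewrite /endv foldl_cat. Qed.

Lemma vl_cat v (l1 l2 : seq gT) : vl v (l1 ++ l2) = vl v l1 ++ vl (endv v l1) l2.
Proof.
elim: l1 v => [|a l1 IH] v; first by [].
by rewrite cat_cons !vl_cons IH.
Qed.

Lemma size_vl v l : size (vl v l) = size l.
Proof. by rewrite size_map size_iota. Qed.

Lemma walk_flow_nil v x y : walk_flow v [::] x y = 0%R.
Proof. by rewrite /walk_flow big_ord0. Qed.

Lemma walk_flow_cons v a l x y :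
  walk_flow v (a :: l) x y = (stepf v a x y + walk_flow (v * a)%g l x y)%R.
Proof.
rewrite /walk_flow big_ord_recl /=; congr (_ + _)%R.
  by rewrite /stepf walk_vert0 /walk_vert /= take0.
Qed.

Lemma walk_flow_cat v (l1 l2 : seq gT) x y :
  walk_flow v (l1 ++ l2) x y = (walk_flow v l1 x y + walk_flow (endv v l1) l2 x y)%R.
Proof.
elim: l1 v => [|a l1 IH] v /=; first by rewrite walk_flow_nil add0r.
by rewrite !walk_flow_cons IH addrA.
Qed.

Lemma foldl_mulL w v l : foldl (fun x y => x * y) (w * v) l = w * foldl (fun x y => x * y) v l.
Proof. by elim: l v => [|a l IH] v //=; rewrite -mulgA IH. Qed.

Lemma walk_vert_trans w v l i : walk_vert (w * v) l i = w * walk_vert v l i.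
Proof. exact: foldl_mulL. Qed.

Lemma eq_trans_l w x z : (x == w * z) = (w^-1 * x == z).
Proof. by apply/eqP/eqP => [->|<-]; rewrite ?mulKg ?mulKVg. Qed.

Lemma walk_flow_trans w v l x y : walk_flow (w * v) l x y = walk_flow v l (w^-1 * x) y.
Proof.
by apply: eq_bigr => i _; rewrite !walk_vert_trans !eq_trans_l.
Qed.

Lemma mem_imset_ord (n : nat) (f : nat -> gT) x :
  (x \in [set f (nat_of_ord i) | i : 'I_n]) = (x \in [seq f i | i <- iota 0 n]).
Proof.
apply/imsetP/mapP => [[i _ ->]|[i]]; first by exists (nat_of_ord i); rewrite // mem_iota /= add0n.
by rewrite mem_iota add0n /= => Hi ->; exists (Ordinal Hi).
Qed.

Variable S : {set gT}.

Lemma ham_trans w v l : ham_cycle_in S setT v l -> ham_cycle_in S setT (w * v) l.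
Proof.
case/and5P => H1 H2 H3 H4 /eqP H5; apply/and5P; split => //.
- by rewrite walk_vert_trans (eqP H2).
- have -> : [seq walk_vert (w * v) l i | i <- iota 0 (size l)] =
            map (mulg w) [seq walk_vert v l i | i <- iota 0 (size l)].
    by rewrite -map_comp; apply: eq_map => i; rewrite /= walk_vert_trans.
  by rewrite map_inj_uniq //; apply: mulgI.
- apply/eqP/setP => x; rewrite inE.
  have : w^-1 * x \in [set: gT] by rewrite inE.
  rewrite -H5 => /imsetP [i _ Hi]; apply/imsetP; exists i => //.
  by rewrite walk_vert_trans -Hi mulKVg.
Qed.

Lemma span_ext f g : (forall x a, a \in S -> f x a = g x a) -> in_ham_span S f -> in_ham_span S g.
Proof. by move=> E [l [H1 H2]]; exists l; split => // x a Ha; rewrite -E // H2. Qed.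

Lemma span0 : in_ham_span S (fun _ _ => 0%R).
Proof. by exists [::]; split => // x a _; rewrite big_nil. Qed.

Lemma spanD f g : in_ham_span S f -> in_ham_span S g -> in_ham_span S (fun x a => f x a + g x a)%R.
Proof.
move=> [l1 [H1 E1]] [l2 [H2 E2]]; exists (l1 ++ l2); split.
  by rewrite all_cat H1 H2.
by move=> x a Ha; rewrite big_cat /= E1 // E2.
Qed.

Lemma spanZ (e : int) f : in_ham_span S f -> in_ham_span S (fun x a => e * f x a)%R.
Proof.
move=> [l [H1 E1]]; exists [seq (e * p.1, p.2)%R | p <- l]; split.
  by rewrite all_map; apply: sub_all H1 => p.
move=> x a Ha; rewrite E1 // big_map mulr_sumr; apply: eq_bigr => p _.
by rewrite mulrA.
Qed.

Lemma span_trans w f : in_ham_span S f -> in_ham_span S (fun x a => f (w^-1 * x) a).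
Proof.
move=> [l [H1 E1]]; exists [seq (p.1, (w * p.2.1, p.2.2)) | p <- l]; split.
  by rewrite all_map; apply: sub_all H1 => p /= /ham_trans.
move=> x a Ha; rewrite E1 // big_map; apply: eq_bigr => p _ /=.
by rewrite walk_flow_trans.
Qed.

Lemma span_walk_all v0 l : in_ham_span S (walk_flow v0 l) -> forall v, in_ham_span S (walk_flow v l).
Proof.
move=> H v; have := span_trans (v * v0^-1) H; apply: span_ext => x a _.
by rewrite -walk_flow_trans mulgKV.
Qed.

End Gen.


Definition coord := (nat * nat * nat)%type.
Definition inv (d : nat) : nat :=
  match d with 0 => 1 | 1 => 0 | 2 => 3 | 3 => 2 | 4 => 5 | _ => 4 end.
Definition move (c : coord) (d : nat) : coord :=
  let: (i, j, k) := c in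
  match d with 0 => (i.+1, j, k) | 1 => (i.-1, j, k) | 2 => (i, j.+1, k)
  | 3 => (i, j.-1, k) | 4 => (i, j, k.+1) | _ => (i, j, k.-1) end.
Definition okmove (c : coord) (d : nat) : bool :=
  let: (i, j, k) := c in
  match d with 0 => true | 1 => 0 < i | 2 => true | 3 => 0 < j | 4 => true | _ => 0 < k end.
Fixpoint validp (c : coord) (ds : seq nat) : bool :=
  if ds is d :: ds' then okmove c d && validp (move c d) ds' else true.
Fixpoint symf (c : coord) (ds : seq nat) : seq (int * (coord * nat)) :=
  if ds is d :: ds' then (Posz 1, (c, d)) :: (Negz 0, (move c d, inv d)) :: symf (move c d) ds'
  else [::].
Fixpoint coordsl (c : coord) (ds : seq nat) : seq coord :=
  if ds is d :: ds' then c :: coordsl (move c d) ds' else [::].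
Fixpoint endc (c : coord) (ds : seq nat) : coord :=
  if ds is d :: ds' then endc (move c d) ds' else c.
Definition coefc (L : seq (int * (coord * nat))) (k : coord * nat) : int :=
  foldr (fun e acc => if e.2 == k then (e.1 + acc)%R else acc) 0%R L.
Definition check (L L' : seq (int * (coord * nat))) : bool :=
  all (fun k => coefc L k == coefc L' k) (map snd L ++ map snd L').
Definition scale (e : int) (L : seq (int * (coord * nat))) :=
  [seq ((e * p.1)%R, p.2) | p <- L].
Definition combo (c0 : coord) (fam : seq (int * seq nat)) :=
  flatten [seq scale p.1 (symf c0 p.2) | p <- fam].

Section Coord.
Variables (gT : finGroupType) (s t u : gT).
Hypothesis HC : forall x y : gT, commute x y.
Local Open Scope group_scope.

Definition el (d : nat) : gT :=
  match d with 0 => s | 1 => s^-1 | 2 => t | 3 => t^-1 | 4 => u | _ => u^-1 end.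
Definition g (b : gT) (c : coord) : gT :=
  let: (i, j, k) := c in b * s ^+ i * t ^+ j * u ^+ k.
Definition ind (b x a : gT) (k : coord * nat) : int :=
  ((x == g b k.1) && (a == el k.2))%:Z.
Definition eval (b : gT) (L : seq (int * (coord * nat))) (x a : gT) : int :=
  (\sum_(e <- L) e.1 * ind b x a e.2)%R.

Lemma mulgC' (x y : gT) : x * y = y * x. Proof. exact: HC. Qed.
Lemma mulgCA' (x y z : gT) : x * (y * z) = y * (x * z).
Proof. by rewrite !mulgA (mulgC' x y). Qed.

Lemma el_inv d : (el d)^-1 = el (inv d).
Proof. by case: d => [|[|[|[|[|d]]]]] /=; rewrite ?invgK. Qed.

Lemma gmove b c d : okmove c d -> g b c * el d = g b (move c d).
Proof.
case: c => [[i j] k].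
case: d => [|[|[|[|[|d]]]]] /=.
- move=> _; rewrite expgSr -!mulgA; congr (_ * (_ * _)).
  by rewrite (mulgC' _ s) mulgCA'.
- case: i => [|i] //= _; rewrite expgSr -!mulgA; congr (_ * (_ * _)).
  by rewrite (mulgC' _ s^-1) mulgCA' mulKVg.
- move=> _; rewrite expgSr -!mulgA; congr (_ * (_ * (_ * _))).
  by rewrite (mulgC' _ t).
- case: j => [|j] //= _; rewrite expgSr -!mulgA; congr (_ * (_ * (_ * _))).
  by rewrite (mulgC' _ t^-1) mulKVg.
- by move=> _; rewrite expgSr -!mulgA.
- by case: k => [|k] //= _; rewrite expgSr mulgA mulgK.
Qed.

Lemma walk_flow_sym b c ds x a :
  validp c ds -> walk_flow (g b c) (map el ds) x a = eval b (symf c ds) x a.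
Proof.
elim: ds c => [|d ds IH] c /=; first by rewrite walk_flow_nil /eval big_nil.
case/andP => ok V; rewrite walk_flow_cons gmove // IH // /eval !big_cons /= /stepf.
by rewrite el_inv gmove // mul1r addrA /ind /= NegzE mulN1r.
Qed.

Lemma vl_sym b c ds : validp c ds -> vl (g b c) (map el ds) = map (g b) (coordsl c ds).
Proof.
elim: ds c => [|d ds IH] c //=.
by case/andP => ok V; rewrite vl_cons gmove // IH.
Qed.

Lemma endv_sym b c ds : validp c ds -> endv (g b c) (map el ds) = g b (endc c ds).
Proof.
elim: ds c => [|d ds IH] c; first by [].
by move=> H; have /andP [ok V] := H; rewrite map_cons endv_cons gmove // IH.
Qed.

Lemma eval_coef b L K x a : uniq K -> {subset map snd L <= K} ->
  eval b L x a = (\sum_(k <- K) coefc L k * ind b x a k)%R.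
Proof.
move=> UK; elim: L => [|e L IH] /= sub.
  by rewrite /eval big_nil big1 // => k _; rewrite mul0r.
rewrite /eval big_cons -/(eval b L x a) IH; last by move=> k Hk; apply: sub; rewrite inE Hk orbT.
have eK : e.2 \in K by apply: sub; rewrite inE eqxx.
rewrite [in RHS](bigD1_seq e.2) //= eqxx (bigD1_seq e.2) //= mulrDl -addrA; congr (_ + _)%R.
congr (_ + _)%R; apply: eq_bigr => k Hk; by rewrite eq_sym (negbTE Hk).
Qed.

Lemma check_eval b L L' x a : check L L' -> eval b L x a = eval b L' x a.
Proof.
move=> /allP H.
set K := undup (map snd L ++ map snd L').
have UK : uniq K by apply: undup_uniq.
rewrite (@eval_coef b L K) //; last by move=> k Hk; rewrite mem_undup mem_cat Hk.
rewrite (@eval_coef b L' K) //; last by move=> k Hk; rewrite mem_undup mem_cat Hk orbT.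
apply: eq_big_seq => k; rewrite mem_undup => Hk; by rewrite (eqP (H k Hk)).
Qed.

Lemma eval_cat b L1 L2 x a : eval b (L1 ++ L2) x a = (eval b L1 x a + eval b L2 x a)%R.
Proof. by rewrite /eval big_cat. Qed.

Lemma eval_scale b e L x a : eval b (scale e L) x a = (e * eval b L x a)%R.
Proof.
by rewrite /eval /scale big_map mulr_sumr; apply: eq_bigr => p _; rewrite mulrA.
Qed.

Lemma eval_combo b c0 fam x a :
  eval b (combo c0 fam) x a = (\sum_(p <- fam) p.1 * eval b (symf c0 p.2) x a)%R.
Proof.
elim: fam => [|p fam IH]; first by rewrite /eval /combo /= !big_nil.
by rewrite /combo /= eval_cat -/(combo c0 fam) IH big_cons eval_scale.
Qed.

End Coord.


Definition ingrid (c : coord) : bool := let: (i, j, k) := c in [&& i < 3, j < 3 & k < 2].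
Definition allgrid : seq coord :=
  [seq (p, k) | p <- [seq (i, j) | i <- iota 0 3, j <- iota 0 3], k <- iota 0 2].
Definition goodpath (cp cq : coord) (X : seq nat) : bool :=
  [&& validp cp X, endc cp X == cq, 2 < size X,
      all ingrid (behead (coordsl cp X)), uniq (behead (coordsl cp X)),
      ~~ ingrid cp & all (fun c => c \in behead (coordsl cp X)) allgrid].
Definition goodcyc (c0 : coord) (X : seq nat) : bool :=
  [&& validp c0 X, endc c0 X == c0, 2 < size X,
      all ingrid (coordsl c0 X), uniq (coordsl c0 X)
    & all (fun c => c \in coordsl c0 X) allgrid].
Definition sqT (n : nat) : seq nat :=
  match n with 0 => [:: 0; 2; 1; 3] | 1 => [:: 0; 4; 1; 5] | _ => [:: 2; 4; 3; 5] end.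
Definition sumc (fam : seq (int * seq nat)) : int :=
  foldr (fun p acc => (p.1 + acc)%R) 0%R fam.
Definition goodfamP cp cq fam csq n : bool :=
  [&& all (goodpath cp cq) (map snd fam), sumc fam == 0%R &
      check (combo cp fam) (symf csq (sqT n))].
Definition goodfamC c0 fam csq n : bool :=
  all (goodcyc c0) (map snd fam) && check (combo c0 fam) (symf csq (sqT n)).
Definition famA_st : seq (int * seq nat) :=
  [:: (Posz 1, [:: 3; 3; 0; 4; 1; 2; 0; 0; 3; 3; 1; 1; 5; 0; 0; 2; 2; 1; 2]);
     (Negz 0, [:: 3; 3; 3; 4; 2; 2; 0; 0; 3; 3; 1; 2; 5; 3; 0; 2; 2; 1; 2]);
     (Posz 1, [:: 3; 4; 3; 0; 5; 1; 3; 4; 0; 5; 0; 4; 2; 5; 2; 4; 1; 5; 2]);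
     (Negz 0, [:: 3; 4; 3; 3; 5; 2; 0; 4; 3; 5; 0; 4; 2; 5; 2; 4; 1; 5; 2])].

Definition cA_st : coord := (0,0,0).

Definition famA_su : seq (int * seq nat) :=
  [:: (Posz 1, [:: 3; 3; 3; 0; 4; 1; 2; 2; 0; 3; 5; 0; 3; 4; 2; 2; 5; 1; 2]);
     (Negz 0, [:: 3; 3; 0; 0; 4; 1; 3; 0; 5; 1; 1; 4; 2; 2; 0; 0; 5; 1; 2]);
     (Posz 1, [:: 3; 4; 3; 5; 0; 3; 1; 4; 0; 0; 5; 2; 2; 4; 3; 1; 2; 5; 2]);
     (Negz 0, [:: 3; 4; 3; 5; 3; 4; 0; 2; 5; 3; 0; 4; 2; 5; 2; 4; 1; 5; 2])].

Definition cA_su : coord := (0,0,0).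

Definition famA_tu : seq (int * seq nat) :=
  [:: (Posz 1, [:: 3; 3; 3; 4; 0; 5; 0; 4; 2; 1; 1; 2; 0; 0; 5; 3; 1; 2; 2]);
     (Negz 0, [:: 3; 3; 3; 4; 0; 2; 1; 2; 0; 0; 5; 3; 4; 3; 5; 1; 2; 2; 2]);
     (Posz 1, [:: 3; 4; 3; 5; 3; 4; 0; 2; 0; 3; 5; 1; 2; 0; 2; 4; 1; 5; 2]);
     (Negz 0, [:: 3; 4; 3; 5; 3; 4; 0; 2; 5; 3; 0; 4; 2; 5; 2; 4; 1; 5; 2])].

Definition cA_tu : coord := (1,0,0).

Definition famB_st : seq (int * seq nat) :=
  [:: (Posz 1, [:: 3; 0; 3; 3; 1; 2; 4; 1; 2; 0; 0; 3; 3; 1; 1; 5; 2; 2; 2]);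
     (Negz 0, [:: 3; 0; 3; 3; 1; 1; 4; 2; 2; 0; 0; 3; 3; 1; 2; 5; 1; 2; 2]);
     (Posz 1, [:: 3; 4; 0; 5; 3; 4; 3; 5; 1; 4; 2; 5; 1; 3; 4; 2; 2; 5; 2]);
     (Negz 0, [:: 3; 4; 0; 5; 3; 4; 3; 5; 1; 4; 1; 5; 2; 0; 4; 1; 2; 5; 2])].

Definition cB_st : coord := (0,0,0).

Definition famB_su : seq (int * seq nat) :=
  [:: (Posz 1, [:: 3; 0; 4; 1; 1; 3; 3; 5; 0; 0; 4; 1; 2; 0; 5; 1; 1; 2; 2]);
     (Negz 0, [:: 3; 0; 4; 3; 3; 5; 2; 1; 4; 2; 1; 3; 3; 0; 5; 1; 2; 2; 2]);
     (Posz 1, [:: 3; 4; 0; 5; 3; 4; 3; 5; 1; 2; 4; 3; 1; 5; 2; 4; 2; 5; 2]);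
     (Negz 0, [:: 3; 4; 3; 0; 2; 5; 3; 3; 4; 1; 1; 5; 0; 2; 1; 4; 2; 5; 2])].

Definition cB_su : coord := (0,0,0).

Definition famB_tu : seq (int * seq nat) :=
  [:: (Posz 1, [:: 3; 0; 3; 1; 1; 3; 4; 0; 5; 0; 4; 2; 2; 1; 3; 1; 2; 5; 2]);
     (Negz 0, [:: 3; 0; 3; 1; 3; 0; 4; 2; 2; 1; 3; 3; 1; 5; 2; 4; 2; 5; 2]);
     (Posz 1, [:: 3; 4; 0; 5; 3; 4; 3; 5; 1; 2; 4; 3; 1; 5; 2; 4; 2; 5; 2]);
     (Negz 0, [:: 3; 4; 0; 5; 3; 4; 3; 5; 1; 2; 1; 3; 4; 0; 2; 1; 2; 5; 2])].

Definition cB_tu : coord := (1,0,0).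

Definition famC_st : seq (int * seq nat) :=
  [:: (Posz 1, [:: 0; 0; 2; 2; 1; 1; 3; 0; 4; 1; 2; 0; 0; 3; 3; 1; 1; 5]);
     (Negz 0, [:: 2; 0; 4; 1; 2; 5; 0; 4; 0; 5; 3; 4; 3; 5; 1; 4; 1; 5]);
     (Posz 1, [:: 2; 2; 0; 0; 3; 3; 1; 2; 4; 3; 0; 2; 2; 1; 1; 3; 3; 5]);
     (Negz 0, [:: 2; 0; 4; 3; 5; 0; 4; 2; 5; 2; 4; 1; 5; 1; 4; 3; 3; 5])].

Definition cC_st : coord := (0,0,0).

Definition famC_su : seq (int * seq nat) :=
  [:: (Posz 1, [:: 0; 0; 4; 1; 2; 0; 5; 1; 1; 2; 0; 0; 4; 1; 1; 3; 3; 5]);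
     (Negz 0, [:: 0; 2; 1; 4; 2; 5; 0; 4; 3; 0; 2; 5; 3; 3; 4; 1; 1; 5]);
     (Posz 1, [:: 0; 4; 1; 2; 2; 0; 3; 5; 0; 3; 4; 2; 2; 5; 1; 1; 3; 3]);
     (Negz 0, [:: 4; 0; 2; 5; 3; 0; 4; 2; 5; 2; 4; 1; 5; 1; 4; 3; 5; 3])].

Definition cC_su : coord := (0,0,0).

Definition famC_tu : seq (int * seq nat) :=
  [:: (Posz 1, [:: 0; 0; 2; 2; 4; 3; 3; 1; 2; 2; 5; 3; 1; 2; 4; 3; 3; 5]);
     (Negz 0, [:: 0; 0; 2; 1; 4; 2; 1; 5; 0; 0; 4; 3; 3; 1; 1; 2; 5; 3]);
     (Posz 1, [:: 2; 0; 4; 1; 2; 5; 0; 4; 0; 5; 3; 4; 3; 5; 1; 4; 1; 5]);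
     (Negz 0, [:: 2; 2; 4; 0; 0; 5; 1; 3; 0; 4; 3; 5; 1; 4; 2; 1; 3; 5])].

Definition cC_tu : coord := (0,0,0).

Lemma dataA : [&& goodfamP (0,3,0) (1,3,0) famA_st cA_st 0,
                  goodfamP (0,3,0) (1,3,0) famA_su cA_su 1 &
                  goodfamP (0,3,0) (1,3,0) famA_tu cA_tu 2].
Proof. vm_compute. reflexivity. Qed.
Lemma dataB : [&& goodfamP (1,3,0) (0,3,0) famB_st cB_st 0,
                  goodfamP (1,3,0) (0,3,0) famB_su cB_su 1 &
                  goodfamP (1,3,0) (0,3,0) famB_tu cB_tu 2].
Proof. vm_compute. reflexivity. Qed.
Lemma dataC : [&& goodfamC (0,0,0) famC_st cC_st 0,
                  goodfamC (0,0,0) famC_su cC_su 1 &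
                  goodfamC (0,0,0) famC_tu cC_tu 2].
Proof. vm_compute. reflexivity. Qed.


Section Main.
Variables (gT : finGroupType) (s t u : gT).
Hypothesis HC : forall x y : gT, commute x y.
Hypothesis Hd : forall (i i' j j' : 'I_3) (k k' : 'I_2),
      (s ^+ i * t ^+ j * u ^+ k = s ^+ i' * t ^+ j' * u ^+ k')%g ->
      [/\ i = i', j = j' & k = k'].
Local Open Scope group_scope.
Local Notation S := (gen3 s t u).
Local Notation Y := (Yset s t u).
Local Notation G := (g s t u 1).
Local Notation E := (el s t u).

Lemma el_in d : E d \in S.
Proof. by rewrite /gen3; case: d => [|[|[|[|[|d]]]]] /=; rewrite !inE eqxx ?orbT. Qed.

Lemma all_el X : all (fun a => a \in S) (map E X).
Proof. by apply/allP => a /mapP [d _ ->]; apply: el_in. Qed.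

Lemma gY c : ingrid c -> G c \in Y.
Proof.
case: c => [[i j] k] /and3P [Hi Hj Hk].
rewrite /Yset inE; apply/existsP; exists (Ordinal Hi); apply/existsP; exists (Ordinal Hj).
by apply/existsP; exists (Ordinal Hk); rewrite /g mul1g.
Qed.

Lemma Ychar x : x \in Y -> exists2 c, ingrid c & x = G c.
Proof.
rewrite /Yset inE => /existsP [i /existsP [j /existsP [k /eqP ->]]].
by exists (nat_of_ord i, nat_of_ord j, nat_of_ord k); rewrite /ingrid ?ltn_ord // /g mul1g.
Qed.

Lemma ginj c c' : ingrid c -> ingrid c' -> G c = G c' -> c = c'.
Proof.
case: c => [[i j] k] /and3P [Hi Hj Hk]; case: c' => [[i' j'] k'] /and3P [Hi' Hj' Hk'].
rewrite /g !mul1g => Eq.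
have [] := @Hd (Ordinal Hi) (Ordinal Hi') (Ordinal Hj) (Ordinal Hj') (Ordinal Hk) (Ordinal Hk') Eq.
by case=> -> [->] [->].
Qed.

Lemma allgrid_mem c : ingrid c -> c \in allgrid.
Proof.
case: c => [[i j] k] /and3P [Hi Hj Hk].
by case: i Hi => [|[|[|]]] // _; case: j Hj => [|[|[|]]] // _; case: k Hk => [|[|]].
Qed.

Lemma in_S a : a \in S -> exists2 d, d < 6 & a = E d.
Proof.
rewrite /gen3 !inE => H.
case: (eqVneq a s) => [->|n1]; first by exists 0%N.
case: (eqVneq a s^-1) => [->|n2]; first by exists 1%N.
case: (eqVneq a t) => [->|n3]; first by exists 2%N.
case: (eqVneq a t^-1) => [->|n4]; first by exists 3%N.
case: (eqVneq a u) => [->|n5]; first by exists 4%N.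
move: H; rewrite (negbTE n1) (negbTE n2) (negbTE n3) (negbTE n4) (negbTE n5) /= => /eqP ->.
by exists 5%N.
Qed.

Lemma valid_sqT c n : validp c (sqT n).
Proof. by case: c => [[i j] k]; case: n => [|[|n]]. Qed.

Lemma ham_grid (HY : Y = setT) c0 X : goodcyc c0 X -> ham_cycle_in S setT (G c0) (map E X).
Proof.
move=> /and3P [V /eqP En /and4P [Hsz Hg Hu Hcov]].
apply/and5P; split.
- exact: all_el.
- by rewrite walk_vert_end (endv_sym s t u HC) // En.
- by rewrite size_map.
- change (uniq (vl (G c0) (map E X))); rewrite (vl_sym s t u HC) //.
  rewrite map_inj_in_uniq // => a b Ha Hb; apply: ginj; exact: (allP Hg).
- apply/eqP/setP => x; rewrite [RHS]inE (mem_imset_ord _ (walk_vert _ _)).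
  change (x \in vl (G c0) (map E X)); rewrite (vl_sym s t u HC) //.
  have : x \in Y by rewrite HY inE.
  case/Ychar => c Hc ->; apply: map_f; exact: (allP Hcov) _ (allgrid_mem Hc).
Qed.

Lemma span_C (HY : Y = setT) c0 fam csq n :
  goodfamC c0 fam csq n -> in_ham_span S (walk_flow (G csq) (map E (sqT n))).
Proof.
case/andP => Hall Hchk.
apply: (@span_ext _ _ (fun x a => eval s t u 1 (combo c0 fam) x a)).
  by move=> x a _; rewrite (check_eval _ _ _ _ _ _ Hchk) (walk_flow_sym s t u HC) // valid_sqT.
exists [seq (p.1, (G c0, map E p.2)) | p <- fam]; split.
  rewrite all_map; apply/allP => p Hp /=; apply: ham_grid => //.
  exact: (allP Hall) _ (map_f snd Hp).
move=> x a _; rewrite eval_combo big_map; apply: eq_big_seq => p Hp /=.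
rewrite (walk_flow_sym s t u HC) //.
by have /and3P [] := (allP Hall) _ (map_f snd Hp).
Qed.

Lemma ham_ins v ts i cp cq X :
  ham_cycle_in S (~: Y) v ts -> i < size ts -> walk_vert v ts i = G cp ->
  walk_vert v ts i.+1 = G cq -> goodpath cp cq X ->
  ham_cycle_in S setT v (take i ts ++ map E X ++ drop i.+1 ts).
Proof.
move=> /and5P [HS Hcl H3 Hu /eqP Hset] Hi Ep Eq.
move=> /and3P [V /eqP En /and5P [Hsz Hg Hub Hncp Hcov]].
have Htake : take i.+1 ts = rcons (take i ts) (nth 1 ts i) := take_nth 1 Hi.
have Eold : vl v ts = vl v (take i ts) ++ G cp :: vl (G cq) (drop i.+1 ts).
  rewrite -{1}(cat_take_drop i.+1 ts) vl_cat -walk_vert_take Eq Htake -cats1 vl_cat.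
  by rewrite -walk_vert_take Ep vl_cons -catA.
have Hc : coordsl cp X = cp :: behead (coordsl cp X) by case: (X) Hsz.
set Yv := map G (behead (coordsl cp X)).
have Enew : vl v (take i ts ++ map E X ++ drop i.+1 ts) =
            vl v (take i ts) ++ G cp :: Yv ++ vl (G cq) (drop i.+1 ts).
  rewrite vl_cat vl_cat -walk_vert_take Ep (vl_sym s t u HC) // (endv_sym s t u HC) // En Hc.
  by [].
have Hold : forall x, x \in vl v ts -> x \notin Y.
  move=> x Hx; have : x \in [set walk_vert v ts i | i : 'I_(size ts)].
    by rewrite (mem_imset_ord _ (walk_vert _ _)).
  by rewrite Hset inE.
apply/and5P; split.
- apply/allP => a; rewrite !mem_cat => /or3P [Ha|Ha|Ha].
  + by apply: (allP HS); apply: mem_take Ha.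
  + by case/mapP: Ha => d _ ->; apply: el_in.
  + by apply: (allP HS); apply: mem_drop Ha.
- rewrite walk_vert_end endv_cat endv_cat -walk_vert_take Ep (endv_sym s t u HC) // En.
  move: Hcl; rewrite walk_vert_end -{1}(cat_take_drop i.+1 ts) endv_cat -walk_vert_take Eq.
  by [].
- rewrite !size_cat size_map; apply: leq_trans Hsz _.
  by rewrite addnCA leq_addr.
- change (uniq (vl v (take i ts ++ map E X ++ drop i.+1 ts))); rewrite Enew.
  have Hp : perm_eq (vl v (take i ts) ++ G cp :: Yv ++ vl (G cq) (drop i.+1 ts))
                    ((vl v (take i ts) ++ G cp :: vl (G cq) (drop i.+1 ts)) ++ Yv).
    by rewrite -catA perm_cat2l /= perm_cons perm_catC.
  rewrite (perm_uniq Hp) cat_uniq -Eold Hu /=; apply/andP; split.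
    apply/hasPn => y /mapP [c Hc' ->]; apply/negP => Hin.
    by have := Hold _ Hin; rewrite gY //; apply: (allP Hg).
  rewrite map_inj_in_uniq // => a b Ha Hb; apply: ginj; exact: (allP Hg).
- apply/eqP/setP => x; rewrite [RHS]inE (mem_imset_ord _ (walk_vert _ _)).
  change (x \in vl v (take i ts ++ map E X ++ drop i.+1 ts)); rewrite Enew.
  case: (boolP (x \in Y)) => HxY.
    case/Ychar: HxY => c Hc' ->.
    by rewrite mem_cat inE mem_cat map_f ?orbT //; apply: (allP Hcov); apply: allgrid_mem.
  have : x \in [set walk_vert v ts i | i : 'I_(size ts)] by rewrite Hset inE.
  rewrite (mem_imset_ord _ (walk_vert _ _)) => H; have : x \in vl v ts := H; rewrite Eold.
  rewrite !(mem_cat, inE) => /or3P [->|->|->] //; by rewrite ?orbT.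
Qed.

Lemma flow_ins v ts i cp cq X x a :
  walk_vert v ts i = G cp -> goodpath cp cq X ->
  walk_flow v (take i ts ++ map E X ++ drop i.+1 ts) x a =
  ((walk_flow v (take i ts) x a + walk_flow (G cq) (drop i.+1 ts) x a) +
    walk_flow (G cp) (map E X) x a)%R.
Proof.
move=> Ep /and3P [V /eqP En _].
rewrite walk_flow_cat walk_flow_cat -walk_vert_take Ep (endv_sym s t u HC) // En.
by rewrite -addrA [(walk_flow (G cq) _ _ _ + _)%R]addrC addrA.
Qed.

Lemma sumcE fam : sumc fam = (\sum_(p <- fam) p.1)%R.
Proof. by elim: fam => [|p fam IH]; rewrite ?big_nil ?big_cons //= IH. Qed.

Lemma span_P v ts i cp cq fam csq n :
  ham_cycle_in S (~: Y) v ts -> i < size ts -> walk_vert v ts i = G cp ->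
  walk_vert v ts i.+1 = G cq -> goodfamP cp cq fam csq n ->
  in_ham_span S (walk_flow (G csq) (map E (sqT n))).
Proof.
move=> Hh Hi Ep Eq /and3P [Hall /eqP Hsum Hchk].
apply: (@span_ext _ _ (fun x a => eval s t u 1 (combo cp fam) x a)).
  by move=> x a _; rewrite (check_eval _ _ _ _ _ _ Hchk) (walk_flow_sym s t u HC) // valid_sqT.
exists [seq (p.1, (v, take i ts ++ map E p.2 ++ drop i.+1 ts)) | p <- fam]; split.
  rewrite all_map; apply/allP => p Hp /=; apply: ham_ins Hh Hi Ep Eq _.
  exact: (allP Hall) _ (map_f snd Hp).
move=> x a _; rewrite eval_combo big_map.
have Hgood : forall p, p \in fam -> goodpath cp cq p.2.
  by move=> p Hp; apply: (allP Hall) _ (map_f snd Hp).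
rewrite [RHS](eq_big_seq (fun p : int * seq nat =>
   (p.1 * (walk_flow v (take i ts) x a + walk_flow (G cq) (drop i.+1 ts) x a) +
    p.1 * eval s t u 1 (symf cp p.2) x a)%R)); last first.
  move=> p Hp /=; rewrite (flow_ins x a Ep (Hgood p Hp)) mulrDr.
  rewrite (walk_flow_sym s t u HC) //; by have /and3P [] := Hgood p Hp.
by rewrite big_split /= -mulr_suml -sumcE Hsum mul0r add0r.
Qed.

End Main.


Definition cube : seq coord :=
  [seq (p, k) | p <- [seq (i, j) | i <- iota 0 4, j <- iota 0 4], k <- iota 0 4].
Definition cands : seq (int * (coord * nat)) :=
  [seq (e, p) | e <- [:: Posz 1; Negz 0], p <- [seq (c, n) | c <- cube, n <- iota 0 3]].
Definition goodD (D : seq nat) : bool :=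
  check (symf (2,2,2) D) [::] ||
  has (fun w => check (symf (2,2,2) D) (scale w.1 (symf w.2.1 (sqT w.2.2)))) cands.
Definition sqD d1 d2 := [:: d1; d2; inv d1; inv d2].

Lemma allD d1 d2 : d1 < 6 -> d2 < 6 -> validp (2,2,2) (sqD d1 d2) && goodD (sqD d1 d2).
Proof.
by case: d1 => [|[|[|[|[|[|d1]]]]]] // _; case: d2 => [|[|[|[|[|[|d2]]]]]] // _; vm_compute.
Qed.

Section Fin.
Variables (gT : finGroupType) (s t u : gT).
Hypothesis HC : forall x y : gT, commute x y.
Local Open Scope group_scope.
Local Notation S := (gen3 s t u).
Local Notation E := (el s t u).

Lemma sq_any (Hsq : forall n v, in_ham_span S (walk_flow v (map E (sqT n)))) v d1 d2 :
  d1 < 6 -> d2 < 6 -> in_ham_span S (walk_flow v (map E (sqD d1 d2))).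
Proof.
move=> h1 h2.
have /andP [V Hg] : validp (2,2,2) (sqD d1 d2) && goodD (sqD d1 d2).
  exact: allD.
pose b0 := v * (s ^+ 2 * (t ^+ 2 * u ^+ 2))^-1.
have Ev : v = g s t u b0 (2,2,2) by rewrite /g /b0 -!mulgA mulVg mulg1.
apply: (@span_ext _ _ (fun x a => eval s t u b0 (symf (2,2,2) (sqD d1 d2)) x a)).
  by move=> x a _; rewrite Ev (walk_flow_sym s t u HC).
case/orP: Hg => [Hz|/hasP [w Hw Hc]].
  apply: (@span_ext _ _ (fun _ _ => 0%R)); last exact: span0.
  by move=> x a _; rewrite (check_eval _ _ _ _ _ _ Hz) /eval big_nil.
apply: (@span_ext _ _ (fun x a => w.1 * walk_flow (g s t u b0 w.2.1) (map E (sqT w.2.2)) x a)%R).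
  by move=> x a _; rewrite (check_eval _ _ _ _ _ _ Hc) eval_scale (walk_flow_sym s t u HC) // valid_sqT.
exact: spanZ (Hsq _ _).
Qed.

End Fin.

Unset Implicit Arguments. Set Strict Implicit.

Theorem proposition10p1 (gT : finGroupType) (s t u : gT) :
  abelian [set: gT] ->
  ~~ odd #|gT| ->
  <<gen3 s t u>>%g = [set: gT] ->
  (forall (i i' j j' : 'I_3) (k k' : 'I_2),
      (s ^+ i * t ^+ j * u ^+ k = s ^+ i' * t ^+ j' * u ^+ k')%g ->
      [/\ i = i', j = j' & k = k']) ->
  (Yset s t u = [set: gT] \/
   exists (v : gT) (ts : seq gT),
     ham_cycle_in (gen3 s t u) (~: Yset s t u) v ts /\
     walk_has_edge v ts (t ^+ 3)%g (t ^+ 3 * s)%g) ->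
  forall (v a b : gT), a \in gen3 s t u -> b \in gen3 s t u ->
    in_ham_span (gen3 s t u) (walk_flow v [:: a; b; a^-1; b^-1]%g).
Proof.
move=> Hab _ _ Hd HY v a b Ha Hb.
have HC : forall x y : gT, commute x y.
  by move=> x y; apply: (centsP Hab); rewrite inE.
have Hex : forall n, n < 3 -> exists c, in_ham_span (gen3 s t u)
             (walk_flow (g s t u 1 c) (map (el s t u) (sqT n))).
  case: HY => [HY|[v0 [ts [Hh He]]]].
    case=> [|[|[|n]]] Hn; last by [].
    - have /and3P [D0 _ _] := dataC.
      by exists cC_st; exact: (span_C HC Hd HY D0).
    - have /and3P [_ D1 _] := dataC.
      by exists cC_su; exact: (span_C HC Hd HY D1).
    - have /and3P [_ _ D2] := dataC.
      by exists cC_tu; exact: (span_C HC Hd HY D2).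
  have Gt3 : g s t u 1 (0,3,0) = (t ^+ 3)%g by rewrite /g expg0 !mulg1 mul1g.
  have Gt3s : g s t u 1 (1,3,0) = (t ^+ 3 * s)%g by rewrite /g expg1 expg0 mulg1 mul1g HC.
  case/existsP: He => i /orP [/andP [/eqP E1 /eqP E2]|/andP [/eqP E1 /eqP E2]].
    rewrite -Gt3 in E1; rewrite -Gt3s in E2.
    case=> [|[|[|n]]] Hn; last by [].
    - have /and3P [D0 _ _] := dataA.
      by exists cA_st; exact: (span_P HC Hd Hh (ltn_ord i) E1 E2 D0).
    - have /and3P [_ D1 _] := dataA.
      by exists cA_su; exact: (span_P HC Hd Hh (ltn_ord i) E1 E2 D1).
    - have /and3P [_ _ D2] := dataA.
      by exists cA_tu; exact: (span_P HC Hd Hh (ltn_ord i) E1 E2 D2).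
  rewrite -Gt3s in E1; rewrite -Gt3 in E2.
  case=> [|[|[|n]]] Hn; last by [].
  - have /and3P [D0 _ _] := dataB.
      by exists cB_st; exact: (span_P HC Hd Hh (ltn_ord i) E1 E2 D0).
  - have /and3P [_ D1 _] := dataB.
      by exists cB_su; exact: (span_P HC Hd Hh (ltn_ord i) E1 E2 D1).
  - have /and3P [_ _ D2] := dataB.
      by exists cB_tu; exact: (span_P HC Hd Hh (ltn_ord i) E1 E2 D2).
have Hsq : forall n v, in_ham_span (gen3 s t u) (walk_flow v (map (el s t u) (sqT n))).
  move=> n w; case: n => [|[|n]].
  - by have [c Hc] := Hex 0 isT; exact: (span_walk_all Hc).
  - by have [c Hc] := Hex 1 isT; exact: (span_walk_all Hc).
  - by have [c Hc] := Hex 2 isT; exact: (span_walk_all Hc).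
have [d1 h1 Ea] := in_S Ha; have [d2 h2 Eb] := in_S Hb.
have -> : [:: a; b; a^-1; b^-1]%g = map (el s t u) (sqD d1 d2).
  by rewrite Ea Eb /= !el_inv.
exact: sq_any.
Qed.
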